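(* Consider the problem $$\min_{L,W}\ \|L\|_*+\lambda_w\|W\|_1\quad\text{s.t.}\quad (1-W)\circ(X-L)=0,\ W\in[0,1]^{mn\times k},$$ with data $X\in\mathbb{R}^{mn\times k}$ and $\lambda_w>0$, and its augmented Lagrangian (with $\rho_x>0$) $$\mathcal{L}(L,W,U_x)=\|L\|_*+\lambda_w\|W\|_1+\iota_{[0,1]}(W)+\langle U_x,(1-W)\circ(L-X)\rangle+\frac{\rho_x}{2}\|(1-W)\circ(L-X)\|^2 .$$ Let $\{(L^i,W^i,U_x^i)\}_{i\ge0}$ be generated, with proximal parameters $\tau_L>0,\tau_W>0$ and initialization $W^0=0$, $U_x^0=0$ and some $L^0$, by the iteration $$L^{i+1}=\arg\min_L \|L\|_*+\frac{\rho_x}{2\tau_L}\big\|L-(L^i-\tau_L\Lambda_L^i)\big\|^2=\mathcal{D}\Big(L^i-\tau_L\Lambda_L^i,\tfrac{\tau_L}{\rho_x}\Big),$$ $$W^{i+1}=\arg\min_W \lambda_w\|W\|_1+\iota_{[0,1]}(W)+\frac{\rho_x}{2\tau_W}\big\|W-(W^i-\tau_W\Lambda_W^i)\big\|^2=\Pi_{[0,1]}\Big[\mathrm{soft}\Big(W^i-\tau_W\Lambda_W^i,\tfrac{\lambda_w\tau_W}{\rho_x}\Big)\Big],$$ $$U_x^{i+1}=U_x^i+\rho_x\big((1-W^{i+1})\circ(L^{i+1}-X)\big),$$ where $\Lambda_L^i=(1-W^i)\circ\big((L^i-X)\circ(1-W^i)+U_x^i/\rho_x\big)$ and $\Lambda_W^i=(X-L^{i+1})\circ\big((L^{i+1}-X)\circ(1-W^i)+U_x^i/\rho_x\big)$.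 Suppose that $\|U_x^{i+1}-U_x^i\|\to0$. Then $\nabla_{U_x}\mathcal{L}(L^i,W^i,U_x^i)\to0$, and every limit point $(L^\infty,W^\infty)$ of the sequence $\{(L^i,W^i)\}_{i\ge0}$ is feasible for the problem above, i.e. $W^\infty\in[0,1]^{mn\times k}$ and $(1-W^\infty)\circ(X-L^\infty)=0$.
   Context: $\|\cdot\|_*$ nuclear norm; $\|\cdot\|_1$ entrywise $\ell_1$ norm; $\|\cdot\|$ Frobenius norm; $\langle\cdot,\cdot\rangle$ the Frobenius inner product; $\circ$ entrywise product; $1$ the all-ones matrix; $\iota_{[0,1]}(W)=0$ if all entries of $W$ lie in $[0,1]$ and $+\infty$ otherwise. $\mathcal{D}(Y,\delta)=U(\Sigma-\delta I)_+V^T$ for an SVD $Y=U\Sigma V^T$ (singular value thresholding, $(a)_+=\max\{0,a\}$). $\mathrm{soft}(Y,t)$ is entrywise soft-thresholding $\mathrm{sign}(Y_{ij})\max\{|Y_{ij}|-t,0\}$, and $\Pi_{[0,1]}$ is entrywise projection onto $[0,1]$. *)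

(* Defs.v *)
From HB Require Import structures.
From mathcomp Require Import all_boot all_order all_algebra.
From mathcomp Require Import reals.
Set Implicit Arguments. Unset Strict Implicit. Unset Printing Implicit Defensive.
Import Order.TTheory GRing.Theory Num.Theory.
Local Open Scope ring_scope.

Section Defs.
Variable R : realType.

Definition hadm p q (A B : 'M[R]_(p, q)) : 'M[R]_(p, q) :=
  \matrix_(i, j) (A i j * B i j).

Definition onesm p q : 'M[R]_(p, q) := const_mx 1.

Definition frob_dot p q (A B : 'M[R]_(p, q)) : R := \sum_i \sum_j A i j * B i j.
Definition frob p q (A : 'M[R]_(p, q)) : R := Num.sqrt (frob_dot A A).

Definition pos_part (a : R) : R := Num.max 0 a.

Definition soft p q (Y : 'M[R]_(p, q)) (t : R) : 'M[R]_(p, q) :=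
  \matrix_(i, j) (Num.sg (Y i j) * pos_part (`|Y i j| - t)).

Definition proj01 p q (Y : 'M[R]_(p, q)) : 'M[R]_(p, q) :=
  \matrix_(i, j) Num.min 1 (Num.max 0 (Y i j)).

Definition in01 p q (W : 'M[R]_(p, q)) : Prop :=
  forall i j, 0 <= W i j <= 1.

Definition orthogonal_mx p (Q : 'M[R]_p) : Prop := Q^T *m Q = 1%:M.

Definition is_svd p q (Y : 'M[R]_(p, q)) (U : 'M[R]_p) (S : 'M[R]_(p, q))
    (V : 'M[R]_q) : Prop :=
  [/\ orthogonal_mx U, orthogonal_mx V,
      (forall (i : 'I_p) (j : 'I_q), (i : nat) <> j -> S i j = 0),
      (forall (i : 'I_p) (j : 'I_q), 0 <= S i j) &
      Y = U *m S *m V^T].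

Definition shrink_diag p q (S : 'M[R]_(p, q)) (d : R) : 'M[R]_(p, q) :=
  \matrix_(i, j) pos_part (S i j - (if (i : nat) == j then d else 0)).

(* singular value thresholding: Z = D(Y, d) = U (Sigma - d I)_+ V^T
   for an SVD Y = U Sigma V^T (the result is independent of the SVD chosen) *)
Definition is_svt p q (Y : 'M[R]_(p, q)) (d : R) (Z : 'M[R]_(p, q)) : Prop :=
  exists U S V, is_svd Y U S V /\ Z = U *m shrink_diag S d *m V^T.

(* gradient of the augmented Lagrangian w.r.t. U_x:
   L(L,W,U) is affine in U with linear part <U, (1-W) o (L-X)>,
   so grad_U L(L,W,U) = (1-W) o (L-X). *)
Definition grad_Ux p q (X L W : 'M[R]_(p, q)) : 'M[R]_(p, q) :=
  hadm (onesm p q - W) (L - X).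

Definition LambdaL p q (rho : R) (X L W U : 'M[R]_(p, q)) : 'M[R]_(p, q) :=
  hadm (onesm p q - W) (hadm (L - X) (onesm p q - W) + rho^-1 *: U).
Definition LambdaW p q (rho : R) (X Lnext W U : 'M[R]_(p, q)) : 'M[R]_(p, q) :=
  hadm (X - Lnext) (hadm (Lnext - X) (onesm p q - W) + rho^-1 *: U).

Definition admm_iterates p q (X : 'M[R]_(p, q)) (lamw rho tauL tauW : R)
    (L W U : nat -> 'M[R]_(p, q)) : Prop :=
  [/\ W 0%N = 0, U 0%N = 0 &
  forall i : nat,
    [/\ is_svt (L i - tauL *: LambdaL rho X (L i) (W i) (U i)) (tauL / rho)
               (L i.+1),
        W i.+1 = proj01 (soft (W i - tauW *: LambdaW rho X (L i.+1) (W i) (U i))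
                              (lamw * tauW / rho)) &
        U i.+1 = U i + rho *: hadm (onesm p q - W i.+1) (L i.+1 - X)]].

Definition tends_to_zero p q (A : nat -> 'M[R]_(p, q)) : Prop :=
  forall eps : R, 0 < eps -> exists N : nat, forall i, (N <= i)%N -> frob (A i) < eps.

Definition limit_point p q (L W : nat -> 'M[R]_(p, q)) (Linf Winf : 'M[R]_(p, q))
  : Prop :=
  forall eps : R, 0 < eps -> forall N : nat, exists i, (N <= i)%N /\
    frob (L i - Linf) < eps /\ frob (W i - Winf) < eps.

End Defs.

(* Main.v *)
Require Import Defs.
From HB Require Import structures.
From mathcomp Require Import all_boot all_order all_algebra.
From mathcomp Require Import reals.
From mathcomp Require Import ring lra.
Import Order.TTheory GRing.Theory Num.Theory.
Local Open Scope ring_scope.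

Lemma entry_le_frob {R : realType} {p q} (A : 'M[R]_(p, q)) a b :
  `|A a b| <= frob A.
Proof.
rewrite /frob /frob_dot -sqrtr_sqr ler_wsqrtr //.
rewrite (bigD1 a) //= (bigD1 b) //= -expr2 -addrA lerDl.
apply: addr_ge0; first by apply: sumr_ge0 => j _; rewrite -expr2 sqr_ge0.
by apply: sumr_ge0 => i _; apply: sumr_ge0 => j _; rewrite -expr2 sqr_ge0.
Qed.

Lemma frobZ (R : realType) p q (c : R) (A : 'M[R]_(p, q)) :
  frob (c *: A) = `|c| * frob A.
Proof.
rewrite /frob /frob_dot.
have -> : \sum_i \sum_j (c *: A) i j * (c *: A) i j =
          c ^+ 2 * \sum_i \sum_j A i j * A i j.
  rewrite mulr_sumr; apply: eq_bigr => i _; rewrite mulr_sumr.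
  by apply: eq_bigr => j _; rewrite !mxE expr2; ring.
by rewrite sqrtrM ?sqr_ge0 // sqrtr_sqr.
Qed.

Theorem proposition3 (R : realType) (m n k : nat) (X : 'M[R]_(m * n, k))
    (lamw rho tauL tauW : R) (L W U : nat -> 'M[R]_(m * n, k)) :
  0 < lamw -> 0 < rho -> 0 < tauL -> 0 < tauW ->
  admm_iterates X lamw rho tauL tauW L W U ->
  tends_to_zero (fun i => U i.+1 - U i) ->
  tends_to_zero (fun i => grad_Ux X (L i) (W i)) /\
  (forall Linf Winf, limit_point L W Linf Winf ->
     in01 Winf /\ hadm (@onesm R (m * n) k - Winf) (X - Linf) = 0).
Proof.
move=> hl hr htL htW [W0 U0 Hit] HU.
have Hg : forall i, grad_Ux X (L i.+1) (W i.+1) = rho^-1 *: (U i.+1 - U i).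
  move=> i; have [_ _ ->] := Hit i.
  by rewrite addrC addKr scalerA mulVf ?gt_eqF // scale1r.
have W01 : forall i a b, 0 <= W i a b <= 1.
  case=> [|i] a b; first by rewrite W0 mxE lexx ler01.
  have [_ -> _] := Hit i; rewrite !mxE.
  by rewrite le_min ler01 le_max lexx /= ge_min lexx.
have P1 : tends_to_zero (fun i => grad_Ux X (L i) (W i)).
  move=> eps he; have [N HN] := HU (eps * rho) (mulr_gt0 he hr).
  exists N.+1 => -[|j] // hj; rewrite Hg frobZ.
  rewrite ger0_norm ?invr_ge0 ?ltW // ltr_pdivrMl // mulrC.
  exact: HN.
split => // Linf Winf Hlp.
have small0 : forall c : R, (forall e, 0 < e -> `|c| < e) -> c = 0.
  move=> c Hc; have [//|Hc0] := eqVneq c 0.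
  by have := Hc `|c|; rewrite normr_gt0 Hc0 ltxx => /(_ isT).
split.
  move=> a b; apply/andP; split.
    rewrite leNgt; apply/negP => Hneg.
    have hp : 0 < - Winf a b by rewrite oppr_gt0.
    have [i [_ [_ Hi]]] := Hlp _ hp 0%N.
    have := le_lt_trans (entry_le_frob _ a b) Hi; rewrite !mxE => H1.
    have := W01 i a b => /andP[h0 h1].
    have := ler_norm (W i a b - Winf a b) => H2.
    lra.
  rewrite leNgt; apply/negP => Hneg.
  have hp : 0 < Winf a b - 1 by rewrite subr_gt0.
  have [i [_ [_ Hi]]] := Hlp _ hp 0%N.
  have := le_lt_trans (entry_le_frob _ a b) Hi; rewrite !mxE => H1.
  have := W01 i a b => /andP[h0 h1].
  have := ler_normr (W i a b - Winf a b) => H2.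
  have := ler_norm (- (W i a b - Winf a b)); rewrite normrN => H3.
  lra.
apply/matrixP => a b; rewrite !mxE.
apply: small0 => eps he.
set w' := Winf a b; set l' := Linf a b; set x := X a b.
set K := 2 + `|l' - x|.
have hK : 0 < K by rewrite /K; have := normr_ge0 (l' - x); lra.
have he' : 0 < eps / K by rewrite divr_gt0.
have [N HN] := P1 _ he'.
have [i [hi [HL HW]]] := Hlp _ he' N.
have Hgi := le_lt_trans (entry_le_frob _ a b) (HN i hi).
have HLa := le_lt_trans (entry_le_frob _ a b) HL.
have HWa := le_lt_trans (entry_le_frob _ a b) HW.
rewrite !mxE in Hgi HLa HWa.
have := W01 i a b => /andP[h0 h1].
set w := W i a b in Hgi HWa h0 h1 *; set l := L i a b in Hgi HLa *.
set e := eps / K in he' Hgi HLa HWa *.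
have -> : (1 - w') * (x - l') =
  - ((1 - w) * (l - x) - (1 - w) * (l - l') + (w - w') * (l' - x)) by ring.
rewrite normrN.
have hw : `|1 - w| <= 1 by rewrite ler_norml; lra.
have h1' : `|(1 - w) * (l - l')| <= `|l - l'|.
  by rewrite normrM -{2}(mul1r `|l - l'|) ler_wpM2r.
have h2' : `|(w - w') * (l' - x)| <= e * `|l' - x|.
  by rewrite normrM ler_wpM2r // ltW.
have hsum : `|(1 - w) * (l - x) - (1 - w) * (l - l') + (w - w') * (l' - x)|
   <= `|(1 - w) * (l - x)| + `|(1 - w) * (l - l')| + `|(w - w') * (l' - x)|.
  apply: (le_trans (ler_normD _ _)); rewrite lerD2r.
  by apply: (le_trans (ler_normB _ _)).
have hE : e * K = eps by rewrite /e mulfVK // gt_eqF.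
have hKe : e * K = e + e + e * `|l' - x| by rewrite /K; ring.
have := normr_ge0 (l' - x).
lra.
Qed.
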